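(* Let $S_0,S_1\subseteq\mathbb Z_{\ge 0}$ with $0\in S_0$ and $1\in S_1$. Assume there is a positive integer $n$ such that for all $a\in S_0$ and all $b_1,\dots,b_n\in S_1$ (not necessarily distinct), $b_1+\cdots+b_n\in S_0$ and $a+b_1+\cdots+b_{n-1}\in S_1$. If $n$ is odd, then there is a nonnegative integer $A(n)$, depending only on $n$, with $A(n)\in S_0\cap S_1$. If $n$ is even, then there is a nonnegative integer $d(n)$, depending only on $n$, such that $S_0$ contains all even integers at least $d(n)$ and $S_1$ contains all odd integers at least $d(n)$. *)

(* Defs.v *)
From mathcomp Require Import all_boot.
Set Implicit Arguments. Unset Strict Implicit. Unset Printing Implicit Defensive.

Definition closure_hyp (n : nat) (S0 S1 : nat -> Prop) : Prop :=
  (forall b : 'I_n -> nat, (forall i, S1 (b i)) -> S0 (\sum_(i < n) b i)) /\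
  (forall (a : nat) (b : 'I_n.-1 -> nat), S0 a -> (forall i, S1 (b i)) ->
     S1 (a + \sum_(i < n.-1) b i)).

(* Main.v *)
Require Import Defs.
From mathcomp Require Import all_boot.
From mathcomp Require Import zify.
Set Implicit Arguments.

Lemma sum_ifx k x : \sum_(i < k.+1) (if nat_of_ord i == 0 then x else 1) = x + k.
Proof.
rewrite big_ord_recl /=.
rewrite (eq_bigr (fun _ => 1)) //.
by rewrite sum_nat_const card_ord muln1.
Qed.

Section Moves.
Variables (n : nat) (S0 S1 : nat -> Prop).
Hypothesis hn : 0 < n.
Hypothesis H : closure_hyp n S0 S1.
Hypothesis h1 : S1 1.

Lemma M1 a : S0 a -> S1 (a + (n - 1)).
Proof.
move=> Ha; have := (proj2 H) a (fun _ => 1) Ha (fun _ => h1).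
by rewrite sum_nat_const card_ord muln1 subn1.
Qed.

Lemma M2 x : S1 x -> S0 (x + (n - 1)).
Proof.
move=> Hx; case: n hn H => // n' _ [H0 _].
have := H0 (fun i => if nat_of_ord i == 0 then x else 1).
rewrite sum_ifx subn1 /=; apply => i; by case: ifP.
Qed.

Lemma M3 x : 1 < n -> S0 0 -> S1 x -> S1 (x + (n - 2)).
Proof.
move=> hn2 h0 Hx; case: n hn2 H => // [] // [] // n' _ [_ H1].
have := H1 0 (fun i => if nat_of_ord i == 0 then x else 1) h0.
rewrite /= sum_ifx add0n subn2 /=; apply => i; by case: ifP.
Qed.

Lemma M3k x k : 1 < n -> S0 0 -> S1 x -> S1 (x + k * (n - 2)).
Proof.
move=> hn2 h0 Hx; elim: k => [|k IH]; first by rewrite addn0.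
by rewrite mulSnr addnA; apply: M3.
Qed.

Lemma M12k a k : S0 a -> S0 (a + k * (2 * (n - 1))).
Proof.
move=> Ha; elim: k => [|k IH]; first by rewrite addn0.
have := M2 (M1 IH). by rewrite mulSn; congr S0; lia.
Qed.

Lemma M21k x k : S1 x -> S1 (x + k * (2 * (n - 1))).
Proof.
move=> Hx; elim: k => [|k IH]; first by rewrite addn0.
have := M1 (M2 IH). by rewrite mulSn; congr S1; lia.
Qed.
End Moves.

Lemma frob h N : 2 * h * h <= N -> exists j k, N = j * (2 * h + 1) + k * h.
Proof.
case: h => [|h] hN.
  by exists N, 0; lia.
exists (N %% h.+1), (N %/ h.+1 - 2 * (N %% h.+1)).
have e := divn_eq N h.+1.
have lt := ltn_pmod N (ltn0Sn h).
have : 2 * h.+1 <= N %/ h.+1 by rewrite leq_divRL //; lia.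
move: e lt; set q := N %/ h.+1; set r := N %% h.+1.
nia.
Qed.

Theorem lemma4p8 (n : nat) (hn : 0 < n) :
  (odd n -> exists A : nat, forall S0 S1 : nat -> Prop,
      S0 0 -> S1 1 -> closure_hyp n S0 S1 -> S0 A /\ S1 A) /\
  (~~ odd n -> exists d : nat, forall S0 S1 : nat -> Prop,
      S0 0 -> S1 1 -> closure_hyp n S0 S1 ->
      (forall m, d <= m -> ~~ odd m -> S0 m) /\
      (forall m, d <= m -> odd m -> S1 m)).
Proof.
split.
- move=> on; exists ((n - 1) * (n - 1)) => S0 S1 h0 h1 H.
  split.
    have := M12k hn H h1 _ ((n - 1)./2) h0.
    have e : n - 1 = 2 * (n - 1)./2 by rewrite -[LHS](odd_double_half) oddB // on /= -muln2 mulnC.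
    by congr S0; rewrite add0n {1}e; set h := (n - 1)./2; nia.
  case: (ltnP 1 n) => n2.
    have := M3k H h1 _ n n2 h0 h1.
    by congr S1; rewrite !mulnBl !mulnBr; lia.
  have := M1 H h1 _ h0; congr S1; have e : n = 1 by lia.
  by rewrite e.
- move=> en; exists (n * n + n) => S0 S1 h0 h1 H.
  have n2 : 1 < n.
    case: (ltnP 1 n) => // h; have e : n = 1 by lia.
    by rewrite e in en.
  have key : forall x, n * n <= x -> odd x -> S1 x.
    move=> x hx ox.
    have [h eh] : exists h, n = 2 * h + 2.
      exists (n./2 - 1); rewrite -[in LHS](odd_double_half n) (negbTE en) /= -muln2; lia.
    have [j [k ejk]] := frob h x./2 ltac:(lia).
    have := M21k hn H h1 _ j (M3k H h1 _ k n2 h0 h1).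
    congr S1; rewrite -[RHS](odd_double_half x) ox ejk -muln2; lia.
  split=> m hm om.
    have := M2 hn H h1 _ (key (m - (n - 1)) ltac:(lia) ltac:(rewrite oddB; [rewrite oddB // (negbTE en) /=; by rewrite (negbTE om) | lia])).
    by congr S0; lia.
  by apply: key => //; lia.
Qed.
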